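(* Let $m\ge 2$ be an integer and set $n=15\cdot 2^{2(m-2)}$, $a=6\cdot 2^{m-2}$, $b=8\cdot 2^{m-2}$. Let $\mathscr{A}_n=\mathrm{Circ}(n,\{\pm(\lfloor n/2\rfloor+1),\dots,\pm(\lfloor n/2\rfloor+a/2)\})$ and $\mathscr{B}_n=\mathrm{Circ}(n,\{\pm1,\dots,\pm a/2\})$ (both $n$-vertex $a$-regular circulant graphs; we also write $\mathscr{A}_n,\mathscr{B}_n$ for their adjacency matrices), and let $C_n$ be the adjacency matrix of an arbitrary $n$-vertex circulant graph of degree $b$. Let $G_n$ be the graph on $2n+2$ vertices with adjacency matrix \[ \begin{bmatrix} 0 & \mathbf{j}_n^T & 0 & 0\\ \mathbf{j}_n & \mathscr{A}_n & C_n & 0\\ 0 & C_n^T & \mathscr{B}_n & \mathbf{j}_n\\ 0 & 0 & \mathbf{j}_n^T & 0 \end{bmatrix}, \] and let $a_n$ and $b_n$ be the vertices corresponding to the first and last rows, respectively. Then $G_n$ has perfect state transfer between $a_n$ and $b_n$, but there is no automorphism $\tau$ of $G_n$ with $\tau(a_n)=b_n$.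
   Context: $\mathrm{Circ}(n,S)$ denotes the circulant graph (Cayley graph of $\mathbb{Z}_n$) with vertex set $\mathbb{Z}_n$ where $x,y$ are adjacent iff $x-y\in S$ (with $S=-S$). $\mathbf{j}_n$ is the all-ones column vector of length $n$. A graph with adjacency matrix $A$ has perfect state transfer from $u$ to $v$ if $|\langle v|e^{-itA}|u\rangle|=1$ for some time $t$, where $|u\rangle$ is the standard basis vector of vertex $u$. An automorphism is a bijection of the vertex set preserving adjacency and non-adjacency. *)

(* Defs.v *)
From HB Require Import structures.
From mathcomp Require Import all_boot all_order all_algebra.
From mathcomp Require Import all_classical all_reals topology normedtype sequences.
From mathcomp Require Import complex fingroup perm.
Set Implicit Arguments. Unset Strict Implicit. Unset Printing Implicit Defensive.
Import Order.TTheory GRing.Theory Num.Theory numFieldNormedType.Exports.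
Local Open Scope ring_scope.
Local Open Scope complex_scope.
Local Open Scope classical_set_scope.

(* difference x - y in Z_n, with Z_n represented by 'I_n *)
Definition zdiff n (x y : 'I_n) : 'I_n :=
  Ordinal (ltn_pmod (x + n - y) (leq_ltn_trans (leq0n x) (ltn_ord x))).

(* adjacency matrix of Circ(n,S): x ~ y iff x - y \in S *)
Definition circ_mx (T : pzRingType) n (S : {set 'I_n}) : 'M[T]_n :=
  \matrix_(i, j) (zdiff i j \in S)%:R.

(* the residue set {±x : x \in l} in Z_n *)
Definition pm_set n (l : seq nat) : {set 'I_n} :=
  [set k : 'I_n | has (fun x => (val k == x %% n)%N || (val k == (n - x %% n) %% n)%N) l].

(* a valid connection set of a (simple, undirected) circulant graph: 0 \notin S, S = -S *)
Definition circ_conn n (S : {set 'I_n}) : Prop :=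
  (forall k, k \in S -> val k != 0%N) /\
  (forall k, k \in S -> exists2 k', k' \in S & val k' = ((n - k) %% n)%N).

Definition nn (m : nat) : nat := 15 * 2 ^ (2 * (m - 2)).
Definition aa (m : nat) : nat := 6 * 2 ^ (m - 2).
Definition bb (m : nat) : nat := 8 * 2 ^ (m - 2).

Definition A_set n a : {set 'I_n} := pm_set n [seq (n./2 + j)%N | j <- iota 1 a./2].
Definition B_set n a : {set 'I_n} := pm_set n (iota 1 a./2).

Definition jvec (T : pzRingType) n : 'cV[T]_n := const_mx 1.

Definition G_mx (T : pzRingType) n (A B C : 'M[T]_n) : 'M[T]_((1 + n) + (n + 1)) :=
  block_mx
    (block_mx (0 : 'M_1) (jvec T n)^T (jvec T n) A)
    (block_mx (0 : 'M_(1, n)) (0 : 'M_(1, 1)) C (0 : 'M_(n, 1)))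
    (block_mx (0 : 'M_(n, 1)) C^T (0 : 'M_1) (0 : 'M_(1, n)))
    (block_mx B (jvec T n) (jvec T n)^T (0 : 'M_1)).

Definition a_vx n : 'I_((1 + n) + (n + 1)) := lshift (n + 1) (lshift n (ord0 : 'I_1)).
Definition b_vx n : 'I_((1 + n) + (n + 1)) := rshift (1 + n) (rshift n (ord0 : 'I_1)).

Definition expm_partial (R : rcfType) N (t : R) (A : 'M[R[i]]_N) (K : nat) : 'M[R[i]]_N :=
  \sum_(k < K) (((- 'i * t%:C) ^+ k / (k`!)%:R) *: A ^+ k).

Definition PST (R : realType) N (A : 'M[R[i]]_N) (u v : 'I_N) : Prop :=
  exists (t : R) (L : R[i]),
    (fun K : nat => complex.Re (expm_partial t A K v u)) @ \oo --> complex.Re L /\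
    (fun K : nat => complex.Im (expm_partial t A K v u)) @ \oo --> complex.Im L /\
    `|L| = 1.

Definition is_aut (T : pzRingType) N (A : 'M[T]_N) (s : {perm 'I_N}) : Prop :=
  forall x y, A (s x) (s y) = A x y.

(* Main.v *)
Require Import Defs.
From HB Require Import structures.
From mathcomp Require Import all_boot all_order all_algebra.
From mathcomp Require Import all_classical all_reals topology normedtype sequences.
From mathcomp Require Import complex fingroup perm.
From mathcomp Require Import trigo zify ring lra.
Local Open Scope ring_scope.

Local Open Scope ring_scope.

Lemma count_int (lo hi n : nat) :
  count (fun k => (lo <= k < hi)%N) (iota 0 n) = (minn hi n - minn lo n)%N.
Proof.
elim: n => [|n IH]; first by rewrite /= !minn0.
rewrite -addn1 iotaD count_cat IH /= add0n addn0.
case: (boolP (lo <= n < hi)%N) => /= H; lia.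
Qed.

Lemma card_setP n (P : nat -> bool) :
  #|[set k : 'I_n | P k]| = count P (iota 0 n).
Proof.
rewrite -sum1_card -val_enum_ord count_map -sum1_count.
rewrite big_enum_cond /=.
by apply: eq_bigl => k; rewrite inE.
Qed.

Lemma zdiff_val n (i j : 'I_n) :
  val (zdiff i j) = (if (j <= i)%N then i - j else i + n - j)%N.
Proof.
rewrite /zdiff /=.
have hi := ltn_ord i; have hj := ltn_ord j.
case: ifP => H.
  by rewrite (_ : (i + n - j = (i - j) + n)%N); [rewrite modnDr modn_small; lia | lia].
by rewrite modn_small; lia.
Qed.

Lemma A_setP n a (k : 'I_n) : (a./2 <= n - n./2 - 1)%N ->
  (k \in A_set n a) =
  ((n./2 + 1 <= k <= n./2 + a./2) || (n - n./2 - a./2 <= k <= n - n./2 - 1))%N.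
Proof.
move=> hc; rewrite /A_set /pm_set inE has_map.
have hk := ltn_ord k.
apply/hasP/idP.
  case=> j; rewrite mem_iota => /andP [h1 h2] /=.
  rewrite !modn_small; lia.
move=> H.
case/orP: H => /andP [H1 H2].
  exists (k - n./2)%N; first by rewrite mem_iota; lia.
  by rewrite /= modn_small; lia.
exists (n - n./2 - k)%N; first by rewrite mem_iota; lia.
rewrite /= !modn_small; lia.
Qed.

Lemma B_setP n a (k : 'I_n) : (a./2 < n)%N ->
  (k \in B_set n a) = ((1 <= k <= a./2) || (n - a./2 <= k <= n - 1))%N.
Proof.
move=> hc; rewrite /B_set /pm_set inE.
have hk := ltn_ord k.
apply/hasP/idP.
  case=> j; rewrite mem_iota => /andP [h1 h2] /=.
  rewrite (modn_small (m := j)); try lia.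
  rewrite modn_small; lia.
move=> H.
case/orP: H => /andP [H1 H2].
  exists (k : nat); first by rewrite mem_iota; lia.
  by rewrite /= modn_small; lia.
exists (n - k)%N; first by rewrite mem_iota; lia.
rewrite /= !modn_small; lia.
Qed.

Lemma card_A n a : (a./2 <= n - n./2 - 1)%N -> #|A_set n a| = (a./2).*2.
Proof.
move=> hc.
pose P1 := fun x => (n./2 + 1 <= x < n./2 + a./2 + 1)%N.
pose P2 := fun x => (n - n./2 - a./2 <= x < n - n./2)%N.
have -> : A_set n a = [set k : 'I_n | predU P1 P2 k].
  apply/setP => k; rewrite A_setP // inE /= /P1 /P2; have := ltn_ord k; move=> ?; apply/idP/idP => ?; lia.
rewrite card_setP.
have E : count (predI P1 P2) (iota 0 n) = 0%N.
  rewrite (eq_count (a2 := pred0)) ?count_pred0 // => x /=; apply/negP; rewrite /P1 /P2; lia.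
have := count_predUI P1 P2 (iota 0 n).
rewrite E addn0 => ->.
rewrite /P1 /P2 !count_int.
lia.
Qed.

Lemma card_B n a : (a./2 < n - a./2)%N -> #|B_set n a| = (a./2).*2.
Proof.
move=> hc.
pose P1 := fun x => (1 <= x < a./2 + 1)%N.
pose P2 := fun x => (n - a./2 <= x < n)%N.
have -> : B_set n a = [set k : 'I_n | predU P1 P2 k].
  apply/setP => k; rewrite B_setP; last lia; rewrite inE /= /P1 /P2; have := ltn_ord k; move=> ?; apply/idP/idP => ?; lia.
rewrite card_setP.
have E : count (predI P1 P2) (iota 0 n) = 0%N.
  rewrite (eq_count (a2 := pred0)) ?count_pred0 // => x /=; apply/negP; rewrite /P1 /P2; lia.
have := count_predUI P1 P2 (iota 0 n).
rewrite E addn0 => ->.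
rewrite /P1 /P2 !count_int.
lia.
Qed.

Local Open Scope ring_scope.

Definition Hpar (n q : nat) : Prop :=
  ((1 <= q)%N /\ ((q = 1 /\ n = 15) \/ (2 <= q /\ n = (n./2) * 2 /\ 18*q+2 <= n)))%N.

Lemma arith2 n q (z0 z1 z2 : 'I_n) : (2 <= q)%N -> n = (n./2 * 2)%N -> (18*q+2 <= n)%N ->
  zdiff z1 z0 \in A_set n (6 * q) -> zdiff z2 z0 \in A_set n (6 * q) ->
  zdiff z2 z1 \in A_set n (6 * q) -> False.
Proof.
move=> hq1 hn hq.
have e : ((6 * q)./2 = 3 * q)%N by rewrite (_ : 6 * q = (3 * q).*2)%N ?doubleK //; lia.
have hc : ((6 * q)./2 <= n - n./2 - 1)%N by rewrite e; lia.
rewrite !A_setP // !zdiff_val e.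
set h := n./2. have hh : n = (h * 2)%N by [].
clearbody h. subst n.
have := ltn_ord z0; have := ltn_ord z1; have := ltn_ord z2.
move: (z0 : nat) (z1 : nat) (z2 : nat) => a b c.
do 3 case: ifP; move=> *; lia.
Qed.

Lemma arith1 (z0 z1 z2 z3 : 'I_15) : (z2 : nat) <> z3 ->
  zdiff z1 z0 \in A_set 15 6 -> zdiff z2 z0 \in A_set 15 6 ->
  zdiff z2 z1 \in A_set 15 6 ->
  zdiff z3 z0 \in A_set 15 6 -> zdiff z3 z1 \in A_set 15 6 -> False.
Proof.
move=> hne.
rewrite !A_setP // !zdiff_val /=.
have := ltn_ord z0; have := ltn_ord z1; have := ltn_ord z2; have := ltn_ord z3.
move: (z0 : nat) (z1 : nat) (z2 : nat) (z3 : nat) hne => a b c d hne.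
case: ifP => ?; case: ifP => ?; case: ifP => ? ; try (move=> *; lia);
 case: ifP => ?; case: ifP => ?; move=> *; lia.
Qed.

Set Implicit Arguments. Unset Strict Implicit. Unset Printing Implicit Defensive.
Local Open Scope ring_scope.

Definition xv n (j : 'I_n) : 'I_((1 + n) + (n + 1)) := lshift (n + 1) (rshift 1 j).
Definition yv n (j : 'I_n) : 'I_((1 + n) + (n + 1)) := rshift (1 + n) (lshift 1 j).

Section G.
Variables (T : nzRingType) (n : nat) (A B C : 'M[T]_n).
Let G := G_mx A B C.

Lemma G_ax j : G (a_vx n) (xv j) = 1.
Proof. by rewrite /G /G_mx /a_vx /xv block_mxEul block_mxEur !mxE. Qed.

Lemma G_by j : G (b_vx n) (yv j) = 1.
Proof. by rewrite /G /G_mx /b_vx /yv block_mxEdr block_mxEdl !mxE. Qed.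

Lemma G_xx i j : G (xv i) (xv j) = A i j.
Proof. by rewrite /G /G_mx /xv block_mxEul block_mxEdr. Qed.

Lemma G_yy i j : G (yv i) (yv j) = B i j.
Proof. by rewrite /G /G_mx /yv block_mxEdr block_mxEul. Qed.

Lemma G_a v : G (a_vx n) v != 0 -> exists j, v = xv j.
Proof.
rewrite -[v]fintype.splitK; case: (fintype.split v) => v' /=.
  rewrite -[v']fintype.splitK; case: (fintype.split v') => v'' /=.
    by rewrite /G /G_mx /a_vx block_mxEul block_mxEul !mxE eqxx.
  by move=> _; exists v''.
rewrite -[v']fintype.splitK; case: (fintype.split v') => v'' /=.
  by rewrite /G /G_mx /a_vx block_mxEur block_mxEul !mxE eqxx.
by rewrite /G /G_mx /a_vx block_mxEur block_mxEur !mxE eqxx.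
Qed.
End G.

Set Implicit Arguments. Unset Strict Implicit. Unset Printing Implicit Defensive.
Import GRing.Theory.
Local Open Scope ring_scope.

Lemma no_aut (T : nzRingType) n q (C : 'M[T]_n) : Hpar n q ->
  ~ (exists s : {perm 'I_((1 + n) + (n + 1))},
     is_aut (G_mx (circ_mx T (A_set n (6 * q))) (circ_mx T (B_set n (6 * q))) C) s
     /\ s (a_vx n) = b_vx n).
Proof.
move=> hp [s [hs hab]].
have [hq1 hq] := hp.
have e : ((6 * q)./2 = 3 * q)%N by rewrite (_ : 6 * q = (3 * q).*2)%N ?doubleK //; lia.
have hn : (15 <= n)%N by lia.
have key : forall i : 'I_n, exists z, (s^-1)%g (yv i) = xv z.
  move=> i; apply: (@G_a T n (circ_mx T (A_set n (6*q))) (circ_mx T (B_set n (6*q))) C).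
  by rewrite -hs permKV hab G_by oner_neq0.
have trans : forall (i j zi zj : 'I_n), (s^-1)%g (yv i) = xv zi -> (s^-1)%g (yv j) = xv zj ->
    zdiff i j \in B_set n (6 * q) -> zdiff zi zj \in A_set n (6 * q).
  move=> i j zi zj ei ej hb.
  have := hs ((s^-1)%g (yv i)) ((s^-1)%g (yv j)).
  rewrite !permKV ei ej G_yy G_xx !mxE hb.
  by case: (_ \in A_set _ _) => //; rewrite /= mulr1n mulr0n => /eqP; rewrite oner_eq0.
have h0 : (0 < n)%N by lia.
have h1 : (1 < n)%N by lia.
have h2 : (2 < n)%N by lia.
have h3 : (n.-1 < n)%N by lia.
have [z0 e0] := key (Ordinal h0).
have [z1 e1] := key (Ordinal h1).
have [z2 e2] := key (Ordinal h2).
have [z3 e3] := key (Ordinal h3).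
have hB : forall (i j : 'I_n), ((i:nat) = j + 1 \/ (i:nat) = j + 2 \/ ((j:nat) <= 1 /\ (i:nat) = n - 1))%N ->
   zdiff i j \in B_set n (6 * q).
  move=> i j hij; rewrite B_setP e ?zdiff_val; last lia.
  have := ltn_ord i; have := ltn_ord j.
  case: ifP => *; lia.
have d10 : zdiff z1 z0 \in A_set n (6*q) by apply: (trans _ _ _ _ e1 e0); apply: hB => /=; lia.
have d20 : zdiff z2 z0 \in A_set n (6*q) by apply: (trans _ _ _ _ e2 e0); apply: hB => /=; lia.
have d21 : zdiff z2 z1 \in A_set n (6*q) by apply: (trans _ _ _ _ e2 e1); apply: hB => /=; lia.
have d30 : zdiff z3 z0 \in A_set n (6*q) by apply: (trans _ _ _ _ e3 e0); apply: hB => /=; lia.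
have d31 : zdiff z3 z1 \in A_set n (6*q) by apply: (trans _ _ _ _ e3 e1); apply: hB => /=; lia.
have hne : (z2 : nat) <> z3.
  move=> /ord_inj E; move: e2; rewrite E -e3 => /perm_inj /rshift_inj /lshift_inj.
  move=> /(congr1 val) /=; lia.
case: hq => [[q1 n15]|[q2 [hn2 hq3]]].
  subst q n. exact (arith1 z0 z1 z2 z3 hne d10 d20 d21 d30 d31).
exact (@arith2 n q z0 z1 z2 q2 hn2 hq3 d10 d20 d21).
Qed.

Set Implicit Arguments. Unset Strict Implicit. Unset Printing Implicit Defensive.
Import GRing.Theory Num.Theory numFieldNormedType.Exports.
Local Open Scope ring_scope.

Lemma zdiff_injr n (i : 'I_n) : injective (zdiff i).
Proof.
move=> j k /(congr1 val); rewrite !zdiff_val => H; apply: val_inj => /=.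
have := ltn_ord i; have := ltn_ord j; have := ltn_ord k.
move: H; case: ifP; case: ifP; move=> *; lia.
Qed.

Lemma zdiff_injl n (j : 'I_n) : injective (fun i : 'I_n => zdiff i j).
Proof.
move=> i k E; cbv beta in E; move: E => /(congr1 val); rewrite !zdiff_val => H; apply: val_inj => /=.
have := ltn_ord i; have := ltn_ord j; have := ltn_ord k.
move: H; case: ifP; case: ifP; move=> *; lia.
Qed.

Lemma sum_mem (T : pzRingType) n (S : {set 'I_n}) :
  \sum_(k : 'I_n) ((k \in S)%:R : T) = #|S|%:R.
Proof.
rewrite -sumr_const [RHS]big_mkcond /=.
by apply: eq_bigr => k _; case: (k \in S).
Qed.

Lemma circ_row (T : pzRingType) n (S : {set 'I_n}) :
  circ_mx T S *m jvec T n = #|S|%:R *: jvec T n.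
Proof.
apply/matrixP => i j; rewrite !mxE mulr1.
under eq_bigr do rewrite !mxE mulr1.
by rewrite -sum_mem [RHS](reindex_inj (@zdiff_injr n i)).
Qed.

Lemma circ_col (T : pzRingType) n (S : {set 'I_n}) :
  (circ_mx T S)^T *m jvec T n = #|S|%:R *: jvec T n.
Proof.
apply/matrixP => i j; rewrite !mxE mulr1.
under eq_bigr do rewrite !mxE mulr1.
by rewrite -sum_mem [RHS](reindex_inj (@zdiff_injl n i)).
Qed.

Lemma jj (T : pzRingType) n : (jvec T n)^T *m jvec T n = (n%:R)%:M.
Proof.
apply/matrixP => i k; rewrite !mxE (ord1 i) (ord1 k) /= mulr1n.
under eq_bigr do rewrite !mxE mulr1.
by rewrite sumr_const card_ord.
Qed.

Definition vec (T : pzRingType) n (al be ga de : T) : 'cV[T]_((1 + n) + (n + 1)) :=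
  col_mx (col_mx (scalar_mx al : 'M_1) (be *: jvec T n)) (col_mx (ga *: jvec T n) (scalar_mx de : 'M_1)).
Arguments vec {T n}.

Lemma Gvec (T : comNzRingType) n (A B C : 'M[T]_n) (a b al be ga de : T) :
  A *m jvec T n = a *: jvec T n -> B *m jvec T n = a *: jvec T n ->
  C *m jvec T n = b *: jvec T n -> C^T *m jvec T n = b *: jvec T n ->
  G_mx A B C *m vec al be ga de =
  vec (n%:R * be) (al + a * be + b * ga) (b * be + a * ga + de) (n%:R * ga).
Proof.
move=> hA hB hC hCt.
rewrite /G_mx /vec !mul_block_col ?mul0mx ?mulmx0 ?add0r ?addr0 ?add_col_mx.
rewrite ?add0r ?addr0 -?scalemxAr ?jj ?hA ?hB ?hC ?hCt ?mul_mx_scalar ?scalerA ?scale_scalar_mx.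
by rewrite (mulrC be n%:R) (mulrC be a) (mulrC ga b) (mulrC be b) (mulrC ga a) (mulrC ga n%:R) addrA !scalerDl.
Qed.

Lemma delta_vec (T : pzRingType) n :
  delta_mx (a_vx n) (0 : 'I_1) = vec (1 : T) 0 0 0 :> 'cV[T]_((1 + n) + (n + 1)).
Proof.
apply/matrixP => v j; rewrite /vec (ord1 j).
rewrite -[v]fintype.splitK; case: (fintype.split v) => i' /=.
  rewrite -[i']fintype.splitK; case: (fintype.split i') => i'' /=.
    by rewrite col_mxEu col_mxEu !mxE (ord1 i'') /a_vx.
  by rewrite col_mxEu col_mxEd !mxE /a_vx /= mul0r.
rewrite -[i']fintype.splitK; case: (fintype.split i') => i'' /=.
  by rewrite col_mxEd col_mxEu !mxE /a_vx /= mul0r.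
by rewrite col_mxEd col_mxEd !mxE (ord1 i'') /a_vx.
Qed.

Lemma vec_b (T : pzRingType) n (al be ga de : T) :
  (vec al be ga de : 'cV[T]_((1 + n) + (n + 1))) (b_vx n) 0 = de.
Proof. by rewrite /vec /b_vx col_mxEd col_mxEd !mxE. Qed.

Section Closed.
Variables (R : realFieldType) (q : R).
Hypothesis q0 : q != 0.

Definition cal (k : nat) : R := 1/32 * (15*q)^+k + 15/32 * (-q)^+k + 5/16 * (3*q)^+k + 3/16 * (-(5*q))^+k.
Definition cbe (k : nat) : R := (1/32 * (15*q)^+k - 1/32 * (-q)^+k + 1/16 * (3*q)^+k - 1/16 * (-(5*q))^+k) / q.
Definition cga (k : nat) : R := (1/32 * (15*q)^+k - 1/32 * (-q)^+k - 1/16 * (3*q)^+k + 1/16 * (-(5*q))^+k) / q.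
Definition cde (k : nat) : R := 1/32 * (15*q)^+k + 15/32 * (-q)^+k - 5/16 * (3*q)^+k - 3/16 * (-(5*q))^+k.

Lemma c0 : [/\ cal 0 = 1, cbe 0 = 0, cga 0 = 0 & cde 0 = 0].
Proof. rewrite /cal /cbe /cga /cde !expr0; split; field; by rewrite ?q0. Qed.

Lemma crec k :
  [/\ cal k.+1 = 15 * q^+2 * cbe k,
      cbe k.+1 = cal k + 6 * q * cbe k + 8 * q * cga k,
      cga k.+1 = 8 * q * cbe k + 6 * q * cga k + cde k &
      cde k.+1 = 15 * q^+2 * cga k].
Proof. rewrite /cal /cbe /cga /cde !exprS; split; field; by rewrite ?q0. Qed.
End Closed.

Local Open Scope complex_scope.
Lemma Gpow (R : realType) n (q : R) (A B C : 'M[R[i]]_n) : q != 0 ->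
  (n%:R : R) = 15 * q^+2 ->
  A *m jvec _ n = (6*q)%:C *: jvec _ n -> B *m jvec _ n = (6*q)%:C *: jvec _ n ->
  C *m jvec _ n = (8*q)%:C *: jvec _ n -> C^T *m jvec _ n = (8*q)%:C *: jvec _ n ->
  forall k, (G_mx A B C)^+k *m vec 1 0 0 0 =
    vec (cal q k)%:C (cbe q k)%:C (cga q k)%:C (cde q k)%:C.
Proof.
move=> q0 hn hA hB hC hCt; elim=> [|k IH].
  have [h1 h2 h3 h4] := c0 q0.
  by rewrite expr0 mul1mx h1 h2 h3 h4 rmorph1 rmorph0.
rewrite exprS -mulmxE -mulmxA IH (Gvec _ _ _ _ hA hB hC hCt).
have [r1 r2 r3 r4] := crec q0 k.
rewrite r1 r2 r3 r4 -hn.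
by rewrite !rmorphD !rmorphM !rmorph_nat.
Qed.

Lemma Gentry (R : realType) n (q : R) (A B C : 'M[R[i]]_n) : q != 0 ->
  (n%:R : R) = 15 * q^+2 ->
  A *m jvec _ n = (6*q)%:C *: jvec _ n -> B *m jvec _ n = (6*q)%:C *: jvec _ n ->
  C *m jvec _ n = (8*q)%:C *: jvec _ n -> C^T *m jvec _ n = (8*q)%:C *: jvec _ n ->
  forall k, ((G_mx A B C)^+k) (b_vx n) (a_vx n) = (cde q k)%:C.
Proof.
move=> q0 hn hA hB hC hCt k.
transitivity (((G_mx A B C)^+k *m delta_mx (a_vx n) (0 : 'I_1)) (b_vx n) 0).
  by rewrite -colE mxE.
by rewrite delta_vec (Gpow q0 hn hA hB hC hCt) vec_b.
Qed.


Lemma cmplx0 (R : rcfType) (s : R) : Complex 0 (- s) = - 'i * s%:C.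
Proof. by apply/eqP; rewrite eq_complex /=; apply/andP; split; apply/eqP; ring. Qed.

Lemma ek (R : realType) (x : R) l :
  ((- 'i * x%:C) ^+ l / (l`!)%:R : R[i]) = Complex (cos_coeff x l) (- sin_coeff x l).
Proof.
have hl := odd_double_half l; set p := l./2 in hl; clearbody p.
have e2 : (- 'i) ^+ (p.*2) = (-1) ^+ p :> R[i].
  by rewrite -mul2n exprM sqrrN sqr_i.
move: hl; case: (odd l) => /= hl; subst l.
  rewrite add1n cos_coeff_odd exprMn exprSr e2.
  rewrite /sin_coeff /= odd_double /= doubleK mul1r.
  rewrite cmplx0 !rmorphM rmorphXn rmorphN1 fmorphV rmorph_nat rmorphXn.
  rewrite exprS; ring.
rewrite add0n sin_coeff_even oppr0 complexr0 exprMn e2.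
rewrite /cos_coeff /= odd_double /= doubleK mul1r.
by rewrite !rmorphM rmorphXn rmorphN1 fmorphV rmorph_nat rmorphXn.
Qed.

Ltac simpc := do ?
  [ rewrite -[(_ +i* _) - (_ +i* _)]/(_ +i* _)
  | rewrite -[(_ +i* _) + (_ +i* _)]/(_ +i* _)
  | rewrite -[(_ +i* _) * (_ +i* _)]/(_ +i* _)].

Lemma term (R : realType) (x lam : R) k :
  ((- 'i * x%:C) ^+ k / (k`!)%:R) * (lam ^+ k)%:C =
  Complex (cos_coeff (x * lam) k) (- sin_coeff (x * lam) k).
Proof. by rewrite -ek rmorphXn mulrAC -exprMn -mulrA -rmorphM. Qed.

Lemma scalC (R : rcfType) (d a b : R) : d%:C * Complex a b = Complex (d * a) (d * b).
Proof. by apply/eqP; rewrite eq_complex /=; apply/andP; split; apply/eqP; ring. Qed.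

Section Partial.
Variables (R : realType) (q t : R).
Definition lam1 := 15 * q. Definition lam2 := - q.
Definition lam3 := 3 * q. Definition lam4 := - (5 * q).
Definition ReP (K : nat) : R :=
  1/32 * series (cos_coeff (t * lam1)) K + 15/32 * series (cos_coeff (t * lam2)) K
  - 5/16 * series (cos_coeff (t * lam3)) K - 3/16 * series (cos_coeff (t * lam4)) K.
Definition ImP (K : nat) : R :=
  - (1/32 * series (sin_coeff (t * lam1)) K + 15/32 * series (sin_coeff (t * lam2)) K
  - 5/16 * series (sin_coeff (t * lam3)) K - 3/16 * series (sin_coeff (t * lam4)) K).

Lemma term_cde k : ((- 'i * t%:C) ^+ k / (k`!)%:R) * (cde q k)%:C =
  Complex (ReP k.+1 - ReP k) (ImP k.+1 - ImP k).
Proof.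
rewrite /ReP /ImP !seriesSr /cde.
rewrite !rmorphB !rmorphD !(rmorphM _ (_ / _)).
rewrite ?mulrDr ?mulrBr ?mulrN !(mulrCA ((- 'i * t%:C) ^+ k / (k`!)%:R)).
rewrite -/lam1 -/lam2 -/lam3 -/lam4 !term !scalC.
simpc.
by f_equal; ring.
Qed.
End Partial.

Lemma partial_sum (R : realType) (q t : R) (f : nat -> R[i]) :
  (forall k, f k = (cde q k)%:C) ->
  forall K, \sum_(k < K) (((- 'i * t%:C) ^+ k / (k`!)%:R) * f k) = Complex (ReP q t K) (ImP q t K).
Proof.
move=> hf; elim=> [|K IH].
  rewrite big_ord0 /ReP /ImP /series /= !big_geq //.
  by rewrite !mulr0 !subr0 !addr0 oppr0.
rewrite big_ord_recr /= IH hf term_cde.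
rewrite -[Complex _ _ + Complex _ _]/(Complex (_ + _) (_ + _)).
by congr Complex; rewrite addrC subrK.
Qed.

Lemma expm_entry (R : realType) N (t : R) (A : 'M[R[i]]_N) K u v :
  expm_partial t A K v u = \sum_(k < K) (((- 'i * t%:C) ^+ k / (k`!)%:R) * (A ^+ k) v u).
Proof. by rewrite /expm_partial summxE; apply: eq_bigr => k _; rewrite mxE. Qed.

Local Open Scope classical_set_scope.
Lemma cvg_cosser (R : realType) (x : R) : series (cos_coeff x) @ \oo --> cos x.
Proof. by apply: cvg_toP; [exact: is_cvg_series_cos_coeff | rewrite unlock]. Qed.
Lemma cvg_sinser (R : realType) (x : R) : series (sin_coeff x) @ \oo --> sin x.
Proof. by apply: cvg_toP; [exact: is_cvg_series_sin_coeff | rewrite unlock]. Qed.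

Section Lim.
Variables (R : realType) (q t : R).
Definition ReL : R := 1/32 * cos (t * lam1 q) + 15/32 * cos (t * lam2 q)
  - 5/16 * cos (t * lam3 q) - 3/16 * cos (t * lam4 q).
Definition ImL : R := - (1/32 * sin (t * lam1 q) + 15/32 * sin (t * lam2 q)
  - 5/16 * sin (t * lam3 q) - 3/16 * sin (t * lam4 q)).

Lemma ReP_cvg : ReP q t K @[K --> \oo] --> ReL.
Proof.
rewrite /ReP /ReL.
apply: cvgB; [apply: cvgB; [apply: cvgD|]|]; apply: cvgMl_tmp; exact: cvg_cosser.
Qed.

Lemma ImP_cvg : ImP q t K @[K --> \oo] --> ImL.
Proof.
rewrite /ImP /ImL; apply: cvgN.
apply: cvgB; [apply: cvgB; [apply: cvgD|]|]; apply: cvgMl_tmp; exact: cvg_sinser.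
Qed.
End Lim.

Lemma vals (R : realType) (q : R) : q != 0 ->
  ReL q (pi / (4 * q)) = cos (pi / 4) /\ ImL q (pi / (4 * q)) = sin (pi / 4).
Proof.
move=> q0.
set y := pi / 4 : R.
have e1 : pi / (4 * q) * lam1 q = (- y + pi *+ 2) + pi *+ 2.
  rewrite /lam1 /y; field; by rewrite ?q0.
have e2 : pi / (4 * q) * lam2 q = - y.
  rewrite /lam2 /y; field; by rewrite ?q0.
have e3 : pi / (4 * q) * lam3 q = - y + pi.
  rewrite /lam3 /y; field; by rewrite ?q0.
have e4 : pi / (4 * q) * lam4 q + pi *+ 2 = - y + pi.
  rewrite /lam4 /y; field; by rewrite ?q0.
rewrite /ReL /ImL e1 e2 e3 -(cosD2pi (pi / (4 * q) * lam4 q)) -(sinD2pi (pi / (4 * q) * lam4 q)) e4.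
rewrite !cosD2pi !sinD2pi !cosDpi !sinDpi cosN sinN.
split; by field.
Qed.

Lemma pst (R : realType) n (q : R) (A B C : 'M[R[i]]_n) : q != 0 ->
  (n%:R : R) = 15 * q^+2 ->
  A *m jvec _ n = (6*q)%:C *: jvec _ n -> B *m jvec _ n = (6*q)%:C *: jvec _ n ->
  C *m jvec _ n = (8*q)%:C *: jvec _ n -> C^T *m jvec _ n = (8*q)%:C *: jvec _ n ->
  PST (G_mx A B C) (a_vx n) (b_vx n).
Proof.
move=> q0 hn hA hB hC hCt.
set t := pi / (4 * q).
have E : forall K, expm_partial t (G_mx A B C) K (b_vx n) (a_vx n) = Complex (ReP q t K) (ImP q t K).
  move=> K; rewrite expm_entry; apply: (@partial_sum R q t (fun k => ((G_mx A B C)^+k) (b_vx n) (a_vx n))).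
  exact: (Gentry q0 hn hA hB hC hCt).
have [h1 h2] := vals q0.
exists t, (Complex (cos (pi / 4)) (sin (pi / 4))).
split; [|split].
- rewrite (_ : (fun K => _) = ReP q t); last by apply/funext => K; rewrite E.
  by rewrite /= -h1; exact: ReP_cvg.
- rewrite (_ : (fun K => _) = ImP q t); last by apply/funext => K; rewrite E.
  by rewrite /= -h2; exact: ImP_cvg.
- by rewrite normc_def /= cos2Dsin2 sqrtr1.
Qed.

Import GRing.Theory Num.Theory.
Local Open Scope ring_scope.

Lemma nn_q m : nn m = (15 * 2 ^ (m - 2) * 2 ^ (m - 2))%N.
Proof. by rewrite /nn (mulnC 2 (m - 2)%N) expnM -[RHS]mulnA (expnS _ 1) expn1. Qed.

Lemma Hpar_m m : (2 <= m)%N -> Hpar (nn m) (2 ^ (m - 2)).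
Proof.
move=> hm; split; first by rewrite expn_gt0.
rewrite nn_q.
case: (ltngtP m 2) => hm2; first lia.
  right; have -> : (m - 2 = (m - 3).+1)%N by lia.
  rewrite expnS.
  set r := (2 ^ (m - 3))%N.
  have hr : (1 <= r)%N by rewrite expn_gt0.
  have -> : (15 * (2 * r) * (2 * r) = (30 * r * r).*2)%N by rewrite -mul2n; lia.
  rewrite doubleK; split; first lia.
  split; first lia.
  nia.
by left; subst m.
Qed.

Local Open Scope complex_scope.
Theorem theorem2 (R : realType) (m : nat) (hm : (2 <= m)%N)
  (S : {set 'I_(nn m)}) (hS : circ_conn S) (hSb : #|S| = bb m) :
  let n := nn m in
  let G := G_mx (circ_mx R[i] (A_set n (aa m))) (circ_mx R[i] (B_set n (aa m)))
                (circ_mx R[i] S) in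
  PST G (a_vx n) (b_vx n) /\
  ~ (exists s : {perm 'I_((1 + n) + (n + 1))}, is_aut G s /\ s (a_vx n) = b_vx n).
Proof.
move=> n G.
have hp := @Hpar_m m hm.
set q := (2 ^ (m - 2))%N in hp.
have hq1 : (1 <= q)%N by rewrite expn_gt0.
have hnq : n = (15 * q * q)%N.
  by rewrite /n nn_q.
have haq : aa m = (6 * q)%N by [].
have hbq : bb m = (8 * q)%N by [].
split; last exact (@no_aut _ n q (circ_mx R[i] S) hp).
have e6 : ((6 * q)./2 = 3 * q)%N by rewrite (_ : 6 * q = (3 * q).*2)%N ?doubleK //; lia.
have [_ hpp] := hp.
have cA : #|A_set n (aa m)| = (6 * q)%N.
  rewrite card_A haq e6; lia.
have cB : #|B_set n (aa m)| = (6 * q)%N.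
  rewrite card_B haq e6; lia.
apply: (@pst R n (q%:R)).
- by rewrite pnatr_eq0 -lt0n.
- by rewrite hnq natrM natrM expr2 mulrA.
- by rewrite circ_row cA natrM rmorphM !rmorph_nat.
- by rewrite circ_row cB natrM rmorphM !rmorph_nat.
- by rewrite circ_row hSb hbq natrM rmorphM !rmorph_nat.
- by rewrite circ_col hSb hbq natrM rmorphM !rmorph_nat.
Qed.
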